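(* Every Bézout ring $R$ whose space of minimal prime ideals $\mathrm{MinSpec}(R)$ (with the Zariski topology) is compact is an Hermite ring.
   Context: All rings are commutative with identity. $R$ is Bézout if every finitely generated ideal is principal. $R$ is Hermite if for every $a,b\in R$ there exist $d,a',b'\in R$ with $a=da'$, $b=db'$ and $Ra'+Rb'=R$. *)

(* Defs.v *)
From HB Require Import structures.
From mathcomp Require Import all_boot all_algebra.
Set Implicit Arguments. Unset Strict Implicit. Unset Printing Implicit Defensive.
Import GRing.Theory.
Local Open Scope ring_scope.

Section Defs.
Variable R : comPzRingType.

Definition is_ideal (I : R -> Prop) : Prop :=
  [/\ I 0, (forall x y, I x -> I y -> I (x + y)) & (forall r x, I x -> I (r * x))].

Definition is_prime_ideal (P : R -> Prop) : Prop :=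
  [/\ is_ideal P, ~ P 1 & (forall a b, P (a * b) -> P a \/ P b)].

Definition is_minimal_prime (P : R -> Prop) : Prop :=
  is_prime_ideal P /\
  (forall Q : R -> Prop, is_prime_ideal Q -> (forall x, Q x -> P x) ->
     forall x, P x -> Q x).

Definition fg_ideal (s : seq R) (x : R) : Prop :=
  exists c : 'I_(size s) -> R, x = \sum_(i < size s) c i * s`_i.

Definition principal_ideal (d : R) (x : R) : Prop := exists r : R, x = r * d.

Definition Bezout_ring : Prop :=
  forall s : seq R, exists d : R, forall x, fg_ideal s x <-> principal_ideal d x.

Definition Hermite_ring : Prop :=
  forall a b : R, exists d a' b' : R,
    [/\ a = d * a', b = d * b' & forall x, fg_ideal [:: a'; b'] x].

(* Zariski topology on MinSpec R: open sets are MinSpec \ V(S) for S a subset of R *)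
Definition minspec_open (U : (R -> Prop) -> Prop) : Prop :=
  exists S : R -> Prop, forall P,
    U P <-> (is_minimal_prime P /\ exists a, S a /\ ~ P a).

Definition minspec_compact : Prop :=
  forall (I : Type) (U : I -> (R -> Prop) -> Prop),
    (forall i, minspec_open (U i)) ->
    (forall P, is_minimal_prime P -> exists i, U i P) ->
    exists (n : nat) (F : nat -> I), forall P, is_minimal_prime P ->
      exists2 k, (k < n)%N & U (F k) P.
End Defs.

(* Main.v *)
Require Import Defs.
From mathcomp Require Import all_boot all_algebra.
From mathcomp Require Import boolp classical_sets.
From Stdlib Require Import Classical.
From mathcomp Require Import ring.
Set Implicit Arguments. Unset Strict Implicit. Unset Printing Implicit Defensive.
Import GRing.Theory.
Local Open Scope ring_scope.
Local Open Scope classical_set_scope.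

Lemma idealN (R : comPzRingType) (I : R -> Prop) x : is_ideal I -> I x -> I (- x).
Proof. by case=> _ _ IM Ix; rewrite -mulN1r; apply: IM. Qed.
Lemma idealB (R : comPzRingType) (I : R -> Prop) x y : is_ideal I -> I x -> I y -> I (x - y).
Proof. move=> Hi Ix Iy; case: (Hi) => _ IA _; apply: IA => //; exact: idealN. Qed.
Lemma idealMr (R : comPzRingType) (I : R -> Prop) x r : is_ideal I -> I x -> I (x * r).
Proof. by case=> _ _ IM Ix; rewrite mulrC; apply: IM. Qed.

Lemma prime_avoid (R : comPzRingType) (S : R -> Prop) :
  S 1 -> ~ S 0 -> (forall x y, S x -> S y -> S (x * y)) ->
  exists Q, is_prime_ideal Q /\ forall s, S s -> ~ Q s.
Proof.
move=> S1 nS0 SM.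
pose Fam := fun A : R -> Prop => A = set0 \/ (is_ideal A /\ forall s, S s -> ~ A s).
have [A [FA Amax]] : exists A, Fam A /\ forall B, A `<` B -> ~ Fam B.
  apply: Zorn_bigcup => F FF Ftot.
  have memI X x : F X -> X x -> is_ideal X /\ forall s, S s -> ~ X s.
    move=> FX Xx; case: (FF _ FX) => // E; by rewrite E in Xx.
  case: (classic (exists X x, F X /\ X x)) => [[X0 [x0 [FX0 X0x0]]]|none]; last first.
    left; apply/seteqP; split => x //= [X FX Xx]; apply: none; by exists X, x.
  right; split; [split|].
  - exists X0 => //; by case: (memI _ _ FX0 X0x0) => [[]].
  - move=> x y [X1 FX1 X1x] [X2 FX2 X2y].
    case: (Ftot _ _ FX1 FX2) => sub.
    + exists X2 => //; case: (memI _ _ FX2 X2y) => [[_ IA _] _]; apply: IA => //; exact: sub.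
    + exists X1 => //; case: (memI _ _ FX1 X1x) => [[_ IA _] _]; apply: IA => //; exact: sub.
  - move=> r x [X FX Xx]; exists X => //; case: (memI _ _ FX Xx) => [[_ _ IM] _]; exact: IM.
  - move=> s Ss [X FX Xs]; case: (memI _ _ FX Xs) => _ D; exact: (D s).
have Aid : is_ideal A /\ forall s, S s -> ~ A s.
  case: FA => // E; exfalso.
  apply: (Amax (fun x => x = 0)).
    rewrite E; split => //; move=> /(_ 0 erefl) //.
  right; split; first split.
  - by [].
  - by move=> x y -> ->; rewrite addr0.
  - by move=> r x ->; rewrite mulr0.
  - by move=> s Ss s0; rewrite s0 in Ss.
case: Aid => Aideal Adisj.
have ext a : ~ A a -> exists s r i, [/\ S s, A i & s = i + r * a].
  move=> nAa; apply: NNPP => H.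
  apply: (Amax (fun z => exists i r, A i /\ z = i + r * a)).
    split.
      by move=> z Az; exists z, 0; rewrite mul0r addr0.
    move=> /(_ a) H2; apply: nAa; apply: H2; exists 0, 1.
    by split; [case: Aideal | rewrite add0r mul1r].
  right; split; first split.
  - by exists 0, 0; split; [case: Aideal | rewrite mul0r addr0].
  - move=> x y [i1 [r1 [Ai1 ->]]] [i2 [r2 [Ai2 ->]]]; exists (i1 + i2), (r1 + r2).
    split; first by case: Aideal => _ IA _; apply: IA.
    by rewrite mulrDl !addrA; congr (_ + _); rewrite -!addrA; congr (_ + _); rewrite addrC.
  - move=> r x [i [r1 [Ai ->]]]; exists (r * i), (r * r1).
    split; first by case: Aideal => _ _ IM; apply: IM.
    by rewrite mulrDr mulrA.
  - move=> s Ss [i [r [Ai E]]]; apply: H; by exists s, r, i.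
exists A; split=> //; split => //.
  by move=> A1; exact: (Adisj 1 S1).
move=> a b Aab; apply: NNPP => /not_or_and [nAa nAb].
have [s1 [r1 [i1 [S1' Ai1 E1]]]] := ext a nAa.
have [s2 [r2 [i2 [S2' Ai2 E2]]]] := ext b nAb.
apply: (Adisj (s1 * s2)); first exact: SM.
case: (Aideal) => _ IA IM.
have -> : s1 * s2 = i1 * s2 + ((r1 * a) * i2 + (r1 * r2) * (a * b)).
  by rewrite E1 E2; ring.
apply: (IA); first exact: idealMr.
apply: (IA); [exact: (IM) | exact: (IM)].
Qed.

Lemma minimal_below (R : comPzRingType) (Q : R -> Prop) :
  is_prime_ideal Q -> exists P, is_minimal_prime P /\ forall x, P x -> Q x.
Proof.
move=> PQ.
pose Fam := fun C : R -> Prop =>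
  C = set0 \/ (is_prime_ideal (fun y => ~ C y) /\ forall x, ~ C x -> Q x).
have [C [FC Cmax]] : exists C, Fam C /\ forall B, C `<` B -> ~ Fam B.
  apply: Zorn_bigcup => F FF Ftot.
  have memP X x : F X -> X x ->
      is_prime_ideal (fun y => ~ X y) /\ forall x, ~ X x -> Q x.
    move=> FX Xx; case: (FF _ FX) => // E; by rewrite E in Xx.
  case: (classic (exists X x, F X /\ X x)) => [[X0 [x0 [FX0 X0x0]]]|none]; last first.
    left; apply/seteqP; split => x //= [X FX Xx]; apply: none; by exists X, x.
  have [[[I0 IA IM] n1 pr] QX0] := memP _ _ FX0 X0x0.
  right; split; first split; first split.
  - move=> [X FX X0']; have [[[I0' _ _] _ _] _] := memP _ _ FX X0'; exact: I0'.
  - move=> x y nUx nUy [X FX Xxy]; have [[[_ IA' _] _ _] _] := memP _ _ FX Xxy.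
    apply: (IA' x y) => // [Xx|Xy]; [apply: nUx | apply: nUy]; by exists X.
  - move=> r x nUx [X FX Xrx]; have [[[_ _ IM'] _ _] _] := memP _ _ FX Xrx.
    apply: (IM' r x) => // Xx; apply: nUx; by exists X.
  - move=> nU1; apply: nU1; exists X0 => //; exact: NNPP.
  - move=> a b nUab; apply: NNPP => /not_or_and [/NNPP [X1 FX1 X1a] /NNPP [X2 FX2 X2b]].
    have [Y [FY Ya Yb]] : exists Y, [/\ F Y, Y a & Y b].
      case: (Ftot _ _ FX1 FX2) => sub.
      + by exists X2; split => //; apply: sub.
      + by exists X1; split => //; apply: sub.
    have [[_ _ prY] _] := memP _ _ FY Ya.
    have nYab : ~ Y (a * b) by move=> Yab; apply: nUab; exists Y.
    by case: (prY a b nYab).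
  - move=> x nUx; apply: QX0 => X0x; apply: nUx; by exists X0.
have Cprime : is_prime_ideal (fun y => ~ C y) /\ forall x, ~ C x -> Q x.
  case: FC => // E; exfalso.
  apply: (Cmax (fun x => ~ Q x)).
    rewrite E; split => //; move=> /(_ 1) H; apply: H; by case: PQ.
  right; split => [|x]; last exact: NNPP.
  have -> : (fun y => ~ ~ Q y) = Q.
    by apply: funext => y; apply: propext; split; [apply: NNPP | tauto].
  exact: PQ.
case: Cprime => Cpr CQ.
exists (fun y => ~ C y); split=> //; split=> // Q' PQ' Q'P x Px.
apply: NNPP => nQ'x.
apply: (Cmax (fun y => ~ Q' y)).
  split.
    move=> y Cy Q'y; exact: (Q'P y Q'y Cy).
  move=> /(_ x nQ'x); exact: Px.
right; split => [|y nQy].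
  have -> : (fun y => ~ ~ Q' y) = Q'.
    by apply: funext => y; apply: propext; split; [apply: NNPP | tauto].
  exact: PQ'.
apply: CQ; apply: Q'P; exact: NNPP.
Qed.

Lemma prime_pow (R : comPzRingType) (P : R -> Prop) x n :
  is_prime_ideal P -> P (x ^+ n) -> P x.
Proof.
move=> [_ n1 pr]; elim: n => [|n IH]; first by rewrite expr0 => /n1.
by rewrite exprS => /pr [].
Qed.

Lemma nil_of_minimal (R : comPzRingType) (z : R) :
  (forall P, is_minimal_prime P -> P z) -> exists m, z ^+ m = 0.
Proof.
move=> H; apply: NNPP => nnil.
have [Q [PQ HQ]] : exists Q, is_prime_ideal Q /\ forall s, (exists n, s = z ^+ n) -> ~ Q s.
  apply: prime_avoid.
  - by exists 0%N; rewrite expr0.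
  - by move=> [n E]; apply: nnil; exists n.
  - by move=> x y [n ->] [m ->]; exists (n + m)%N; rewrite exprD.
have [P [mP PQ']] := minimal_below PQ.
apply: (HQ z); first by exists 1%N; rewrite expr1.
exact: PQ' (H P mP).
Qed.

Lemma minimal_ann (R : comPzRingType) (P : R -> Prop) u :
  is_minimal_prime P -> P u -> exists y n, ~ P y /\ y * u ^+ n = 0.
Proof.
move=> [pP minP] Pu; apply: NNPP => H.
have [Q [PQ HQ]] : exists Q, is_prime_ideal Q /\
    forall s, (exists y n, ~ P y /\ s = y * u ^+ n) -> ~ Q s.
  apply: prime_avoid.
  - by exists 1, 0%N; rewrite mul1r expr0; split => //; case: pP.
  - move=> [y [n [nPy E]]]; apply: H; by exists y, n.
  - move=> x1 x2 [y1 [n1 [nP1 ->]]] [y2 [n2 [nP2 ->]]].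
    exists (y1 * y2), (n1 + n2)%N; split.
      by case: pP => _ _ pr /pr [].
    by rewrite exprD; ring.
have QP x : Q x -> P x.
  move=> Qx; apply: NNPP => nPx; apply: (HQ x) => //; exists x, 0%N.
  by rewrite expr0 mulr1.
apply: (HQ u); first by exists 1, 1%N; rewrite expr1 mul1r; split => //; case: pP.
exact: minP.
Qed.

Lemma fg2 (R : comPzRingType) (a b x : R) :
  fg_ideal [:: a; b] x <-> exists c0 c1, x = c0 * a + c1 * b.
Proof.
rewrite /fg_ideal /=; split => [[c ->]|[c0 [c1 ->]]].
  by exists (c ord0), (c (lift ord0 ord0)); rewrite !big_ord_recl big_ord0 addr0.
exists (fun i : 'I_2 => if val i == 0%N then c0 else c1).
by rewrite !big_ord_recl big_ord0 addr0.
Qed.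

Lemma fg_nth (R : comPzRingType) (s : seq R) k :
  (k < size s)%N -> fg_ideal s s`_k.
Proof.
move=> ks; exists (fun i => (val i == k)%:R).
rewrite (bigD1 (Ordinal ks)) //= eqxx mul1r big1 ?addr0 // => i ik.
have -> : (val i == k) = false.
  by apply/negbTE; apply: contra ik => /eqP ik'; apply/eqP/val_inj.
by rewrite mul0r.
Qed.

Lemma compact_sep (R : comPzRingType) (u : R) :
  Bezout_ring R -> minspec_compact R ->
  exists g N, g * u ^+ N = 0 /\ forall P, is_minimal_prime P -> P u -> ~ P g.
Proof.
move=> Bez Cpt.
pose I := {y : R | y = u \/ exists n, y * u ^+ n = 0}.
pose U (i : I) := fun P : R -> Prop =>
  is_minimal_prime P /\ exists a, (fun a => a = sval i) a /\ ~ P a.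
have [n [F HF]] : exists (n : nat) (F : nat -> I), forall P, is_minimal_prime P -> exists2 k, (k < n)%N & U (F k) P.
  apply: Cpt.
- by move=> i; exists (fun a => a = sval i) => P.
- move=> P mP; case: (classic (P u)) => Pu.
    have [y [m [nPy Hy]]] := minimal_ann mP Pu.
    exists (exist _ y (or_intror (ex_intro _ m Hy))); split => //; by exists y.
  exists (exist _ u (or_introl erefl)); split => //; by exists u.
pose w y := if y == u then 0 else y.
pose s := [seq w (sval (F k)) | k <- iota 0 n].
have sizes : size s = n by rewrite size_map size_iota.
have sk k : (k < n)%N -> s`_k = w (sval (F k)).
  by move=> kn; rewrite (nth_map 0%N) ?size_iota // nth_iota.
have [N HN] : exists N, forall k, (k < n)%N -> s`_k * u ^+ N = 0.
  suff H m : exists N, forall k, (k < m)%N -> (k < n)%N -> s`_k * u ^+ N = 0.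
    by have [N HN] := H n; exists N => k kn; exact: HN.
  elim: m => [|m [N HN]]; first by exists 0%N.
  have [n' Hn'] : exists n', (m < n)%N -> s`_m * u ^+ n' = 0.
    case: (ltnP m n) => mn; last by exists 0%N.
    rewrite sk // /w; case: eqP => [_|neq]; first by exists 0%N; rewrite mul0r.
    case: (svalP (F m)) => // [[n'' Hn'']]; by exists n''.
  exists (N + n')%N => k km kn; rewrite exprD mulrA.
  rewrite ltnS leq_eqVlt in km; case/orP: km => [/eqP Ekm|km].
    by rewrite Ekm in kn *; rewrite mulrAC (Hn' kn) mul0r.
  by rewrite HN // mul0r.
have [g Hg] := Bez s.
exists g, N; split.
  have [c Ec] : fg_ideal s g by apply/Hg; exists 1; rewrite mul1r.
  rewrite Ec mulr_suml big1 // => i _; rewrite -mulrA HN ?mulr0 //.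
  by rewrite -sizes.
move=> P mP Pu Pg.
have [k kn [_ [y [Ey nPy]]]] := HF P mP.
have yu : y != u by apply/eqP => E; rewrite E in nPy.
have sky : s`_k = y by rewrite sk // /w Ey; rewrite Ey in yu; rewrite (negbTE yu).
have [r Er] : principal_ideal g (s`_k) by apply/Hg; apply: fg_nth; rewrite sizes.
apply: nPy; rewrite -sky Er; case: mP => [[[_ _ IM] _ _] _]; exact: IM.
Qed.

Theorem theorem3p3 (R : comPzRingType) :
  Bezout_ring R -> minspec_compact R -> Hermite_ring R.
Proof.
move=> Bez Cpt a b.
have [d Hd] := Bez [:: a; b].
have [u [v Euv]] : exists u v, d = u * a + v * b.
  by apply/fg2/Hd; exists 1; rewrite mul1r.
have [a1 Ea] : principal_ideal d a by apply/Hd/fg2; exists 1, 0; rewrite mul1r mul0r addr0.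
have [b1 Eb] : principal_ideal d b by apply/Hd/fg2; exists 0, 1; rewrite mul1r mul0r add0r.
pose t := 1 - u * a1 - v * b1.
have t1 : 1 = u * a1 + v * b1 + t by rewrite /t; ring.
have td : t * d = 0.
  have -> : t * d = d - u * (a1 * d) - v * (b1 * d) by rewrite /t; ring.
  by rewrite -Ea -Eb {1}Euv; ring.
have [g [N [gN sepg]]] := compact_sep u Bez Cpt.
pose x := u + t * g.
have Exv : x * a + v * b = d.
  have -> : x * a + v * b = u * (a1 * d) + v * b + g * a1 * (t * d).
    by rewrite /x Ea; ring.
  by rewrite td mulr0 addr0 -Ea Euv.
have [h Hh] := Bez [:: x; v].
have [rho [sig Eh]] : exists rho sig, h = rho * x + sig * v.
  by apply/fg2/Hh; exists 1; rewrite mul1r.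
have [x0 Ex] : principal_ideal h x by apply/Hh/fg2; exists 1, 0; rewrite mul1r mul0r addr0.
have [y0 Ey] : principal_ideal h v by apply/Hh/fg2; exists 0, 1; rewrite mul1r mul0r add0r.
pose k := 1 - rho * x0 - sig * y0.
have hk : h * k = 0.
  have -> : h * k = h - rho * (x0 * h) - sig * (y0 * h) by rewrite /k; ring.
  by rewrite -Ex -Ey {1}Eh; ring.
have allk : forall P, is_minimal_prime P -> P k.
  move=> P mP; have [[[I0 IA IM] n1 pr] _] := mP.
  have Pid : is_ideal P by [].
  have nPh : ~ P h.
    move=> Ph.
    have Px : P x by rewrite Ex; apply: (IM).
    have Pv : P v by rewrite Ey; apply: (IM).
    case: (classic (P u)) => Pu.
      have Ptg : P (t * g).
        have -> : t * g = x - u by rewrite /x; ring.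
        exact: idealB.
      case: (pr _ _ Ptg) => [Pt|Pg]; last exact: (sepg P mP Pu).
      apply: n1; rewrite t1; apply: (IA); last exact: Pt.
      by apply: (IA); [rewrite mulrC | rewrite mulrC]; apply: (IM).
    have Pg : P g.
      have : P (g * u ^+ N) by rewrite gN.
      case/pr => // /(prime_pow (P := P)) H; exfalso; apply: Pu; apply: H.
      by split.
    apply: Pu; have -> : u = x - t * g by rewrite /x; ring.
    by apply: idealB => //; apply: (IM).
  have : P (h * k) by rewrite hk.
  by case/pr.
have [m km] := nil_of_minimal allk.
pose W := \sum_(i < m) k ^+ i.
have kW : (1 - k) * W = 1.
  have : k ^+ m - 1 = (k - 1) * W by rewrite subrX1.
  rewrite km => E.
  have -> : (1 - k) * W = - ((k - 1) * W) by ring.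
  by rewrite -E; ring.
pose p0 := rho * W.
pose q0 := sig * W.
have Hpq : p0 * x0 + q0 * y0 = 1.
  rewrite -kW /p0 /q0 /k; ring.
pose d0 := x0 * a + y0 * b.
have hd0 : d = h * d0.
  by rewrite -Exv Ex Ey /d0; ring.
have Ea0 : a = (a1 * h) * d0 by rewrite {1}Ea hd0; ring.
have Eb0 : b = (b1 * h) * d0 by rewrite {1}Eb hd0; ring.
pose delta := q0 * (a1 * h) - p0 * (b1 * h).
exists d0, (p0 + y0 * delta), (q0 - x0 * delta); split.
- have -> : d0 * (p0 + y0 * delta)
      = d0 * p0 + y0 * (q0 * ((a1 * h) * d0) - p0 * ((b1 * h) * d0)).
    by rewrite /delta; ring.
  rewrite -Ea0 -Eb0 /d0.
  have -> : (x0 * a + y0 * b) * p0 + y0 * (q0 * a - p0 * b)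
      = a * (p0 * x0 + q0 * y0) by ring.
  by rewrite Hpq mulr1.
- have -> : d0 * (q0 - x0 * delta)
      = d0 * q0 - x0 * (q0 * ((a1 * h) * d0) - p0 * ((b1 * h) * d0)).
    by rewrite /delta; ring.
  rewrite -Ea0 -Eb0 /d0.
  have -> : (x0 * a + y0 * b) * q0 - x0 * (q0 * a - p0 * b)
      = b * (p0 * x0 + q0 * y0) by ring.
  by rewrite Hpq mulr1.
- move=> z; apply/fg2; exists (z * x0), (z * y0).
  have -> : z * x0 * (p0 + y0 * delta) + z * y0 * (q0 - x0 * delta)
      = z * (p0 * x0 + q0 * y0) by ring.
  by rewrite Hpq mulr1.
Qed.
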